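(* Let $A$ be a commutative DGA and $\lambda=(0\to Z\to\widetilde L\xrightarrow{\pi}L\to0)$ an MC-product data. Let $\alpha\in A^+\otimes L$ be a defining system and $X\in(A^+\otimes L)^0$. Then $\exp X\cdot\alpha$ is again a defining system and $m(\exp X\cdot\alpha)=m(\alpha)$.
   Context: All algebras are over $\mathbb{Q}$. A commutative DGA $(A,d)$ is a graded-commutative algebra $A=\bigoplus_{i\ge0}A^i$ with a degree $+1$ derivation $d$, $d^2=0$. Write $A^+=\bigoplus_{i>0}A^i$. A DGLA is a graded Lie algebra with a degree $+1$ differential which is a derivation. It is nilpotent if its lower central series terminates at $0$. For a DGLA $(L,d_L)$, $A\otimes L$ is the DGLA with total grading, bracket $[b_1\otimes w_1,b_2\otimes w_2]=(-1)^{|w_1||b_2|}b_1b_2\otimes[w_1,w_2]$ and differential $d(b\otimes w)=d_Ab\otimes w+(-1)^{|b|}b\otimes d_Lw$. For degree-one $\alpha$ put $F(\alpha)=d\alpha+\tfrac12[\alpha,\alpha]$; $\alpha$ is a Maurer–Cartan element if $F(\alpha)=0$. For a nilpotent DGLA $\Lambda$ and $X\in\Lambda^0$, the gauge action is $(\exp X)\cdot\alpha=\alpha-\sum_{i\ge0}\frac{(\operatorname{ad}X)^i}{(i+1)!}(dX+[\alpha,X])$. An MC-product data consists of: - a central extension $0\to Z\to\widetilde L\xrightarrow{\pi}L\to0$ of nilpotent DGLAs (differentials $\tilde d_L$, $d_L$) concentrated in nonpositive degrees, with $Z\subseteq\ker\tilde d_L$ and $\operatorname{Im}\tilde d_L\cap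 Z=0$; - an isomorphism $Z\cong\mathbb{Q}[q]$ ($q\le0$). A defining system is an MC element $\alpha\in A^+\otimes L$. For any degree-one lift $\tilde\alpha\in A^+\otimes\widetilde L$, $F(\tilde\alpha)\in A^+\otimes Z\cong A^+[q]$ is a cocycle of degree $2-q$ in $A$. Its class $m(\alpha)\in H^{2-q}(A)$ is independent of the lift and is the MC higher product. *)

(* Defs.v *)
From HB Require Import structures.
From mathcomp Require Import all_boot all_order all_algebra.
Set Implicit Arguments. Unset Strict Implicit. Unset Printing Implicit Defensive.
Import Order.TTheory GRing.Theory Num.Theory.
Local Open Scope ring_scope.

(* A graded vector space is modelled as a
   single carrier V (the direct sum) together with a predicate
   [deg i v] : "v is homogeneous of degree i", subject to the direct-sum axioms. *)

Definition sgn (n : int) : rat := (-1) ^ n.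

Definition is_linear (U V : lmodType rat) (f : U -> V) : Prop :=
  forall (r : rat) (u v : U), f (r *: u + v) = r *: f u + f v.

Definition is_bilinear (U W V : lmodType rat) (f : U -> W -> V) : Prop :=
  (forall u, is_linear (f u)) /\ (forall w, is_linear (fun u => f u w)).

Definition span (V : lmodType rat) (P : V -> Prop) (v : V) : Prop :=
  exists s : seq (rat * V), (forall p, p \in s -> P p.2) /\
    v = \sum_(p <- s) p.1 *: p.2.

Definition is_graded (V : lmodType rat) (deg : int -> V -> Prop) : Prop :=
  [/\ (forall i, deg i 0),
      (forall i (r : rat) u v, deg i u -> deg i v -> deg i (r *: u + v)),
      (forall v : V, exists s : seq (int * V),
          (forall p, p \in s -> deg p.1 p.2) /\ v = \sum_(p <- s) p.2) &
      (forall s : seq (int * V), uniq (map fst s) ->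
          (forall p, p \in s -> deg p.1 p.2) -> \sum_(p <- s) p.2 = 0 ->
          forall p, p \in s -> p.2 = 0)].

Definition is_cdga (A : lmodType rat) (deg : int -> A -> Prop)
    (mul : A -> A -> A) (one : A) (d : A -> A) : Prop :=
  [/\ is_graded deg,
      (forall i a, i < 0 -> deg i a -> a = 0),
      is_bilinear mul,
      (forall a b c, mul a (mul b c) = mul (mul a b) c) &
      [/\ deg 0 one, (forall a, mul one a = a) & (forall a, mul a one = a)]] /\
  [/\ (forall i j a b, deg i a -> deg j b -> deg (i + j) (mul a b)),
      (forall i j a b, deg i a -> deg j b -> mul a b = sgn (i * j) *: mul b a) &
      [/\ is_linear d, (forall i a, deg i a -> deg (i + 1) (d a)),
          (forall a, d (d a) = 0) &
          (forall i a b, deg i a -> d (mul a b) = mul (d a) b + sgn i *: mul a (d b))]].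

Definition is_dgla (L : lmodType rat) (deg : int -> L -> Prop)
    (br : L -> L -> L) (d : L -> L) : Prop :=
  [/\ is_graded deg,
      is_bilinear br,
      (forall i j x y, deg i x -> deg j y -> deg (i + j) (br x y)),
      (forall i j x y, deg i x -> deg j y -> br x y = - (sgn (i * j) *: br y x)) &
      (forall i j x y z, deg i x -> deg j y ->
          br x (br y z) = br (br x y) z + sgn (i * j) *: br y (br x z))] /\
      [/\ is_linear d, (forall i x, deg i x -> deg (i + 1) (d x)),
          (forall x, d (d x) = 0) &
          (forall i x y, deg i x -> d (br x y) = br (d x) y + sgn i *: br x (d y))].

Fixpoint lcs (L : lmodType rat) (br : L -> L -> L) (k : nat) : L -> Prop :=
  match k with
  | 0 => fun _ => True
  | k'.+1 => span (fun v => exists x y, lcs br k' y /\ v = br x y)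
  end.

Definition nilpotent (L : lmodType rat) (br : L -> L -> L) : Prop :=
  exists k, forall v, lcs br k v -> v = 0.

Definition concentrated_nonpos (L : lmodType rat) (deg : int -> L -> Prop) : Prop :=
  forall i v, 0 < i -> deg i v -> v = 0.

Definition is_dgla_morphism (L1 L2 : lmodType rat)
    (deg1 : int -> L1 -> Prop) (br1 : L1 -> L1 -> L1) (d1 : L1 -> L1)
    (deg2 : int -> L2 -> Prop) (br2 : L2 -> L2 -> L2) (d2 : L2 -> L2)
    (f : L1 -> L2) : Prop :=
  [/\ is_linear f, (forall i x, deg1 i x -> deg2 i (f x)),
      (forall x y, f (br1 x y) = br2 (f x) (f y)) &
      (forall x, f (d1 x) = d2 (f x))].

Definition is_tensor (A L T : lmodType rat) (t : A -> L -> T) : Prop :=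
  is_bilinear t /\
  forall (V : lmodType rat) (f : A -> L -> V), is_bilinear f ->
    exists g : T -> V, [/\ is_linear g, (forall a w, g (t a w) = f a w) &
      (forall h : T -> V, is_linear h -> (forall a w, h (t a w) = f a w) ->
          forall x, h x = g x)].

Definition is_tensor_dgla (A L T : lmodType rat)
    (degA : int -> A -> Prop) (mulA : A -> A -> A) (dA : A -> A)
    (degL : int -> L -> Prop) (brL : L -> L -> L) (dL : L -> L)
    (t : A -> L -> T) (brT : T -> T -> T) (dT : T -> T) : Prop :=
  [/\ is_bilinear brT, is_linear dT,
      (forall i1 j1 i2 j2 b1 w1 b2 w2, degA i1 b1 -> degL j1 w1 ->
          degA i2 b2 -> degL j2 w2 ->
          brT (t b1 w1) (t b2 w2) = sgn (j1 * i2) *: t (mulA b1 b2) (brL w1 w2)) &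
      (forall i j b w, degA i b -> degL j w ->
          dT (t b w) = t (dA b) w + sgn i *: t b (dL w))].

(* x lies in (A^+ (x) L)^n, i.e. in the span of the b (x) w with
   b in A^i, i > 0, w in L^j, i + j = n *)
Definition tdeg_pos (A L T : lmodType rat)
    (degA : int -> A -> Prop) (degL : int -> L -> Prop) (t : A -> L -> T)
    (n : int) (x : T) : Prop :=
  span (fun v => exists i j a w,
           [/\ 0 < i, i + j = n, degA i a, degL j w & v = t a w]) x.

Definition MC_F (T : lmodType rat) (brT : T -> T -> T) (dT : T -> T) (x : T) : T :=
  dT x + 2%:R^-1 *: brT x x.

Definition defining_system (A L T : lmodType rat)
    (degA : int -> A -> Prop) (degL : int -> L -> Prop) (t : A -> L -> T)
    (brT : T -> T -> T) (dT : T -> T) (x : T) : Prop :=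
  tdeg_pos degA degL t 1 x /\ MC_F brT dT x = 0.

(* gauge action, series truncated after N terms (N chosen so that
   (ad X)^N (dX + [alpha, X]) = 0, whence all later terms vanish) *)
Definition gauge (T : lmodType rat) (brT : T -> T -> T) (dT : T -> T)
    (N : nat) (X alpha : T) : T :=
  alpha - \sum_(i < N) ((i.+1)`!%:R^-1 : rat) *:
            iter i (brT X) (dT X + brT alpha X).

(* Main.v *)
Require Import Defs.
From mathcomp Require Import all_boot all_order all_algebra.
From mathcomp Require Import ring zify.
From mathcomp Require classical_sets.
From Stdlib Require Import Classical ClassicalEpsilon.
Import Defs.
Set Implicit Arguments. Unset Strict Implicit. Unset Printing Implicit Defensive.
Import GRing.Theory Num.Theory.
Local Open Scope ring_scope.

Lemma sgnD (a b : int) : sgn (a + b) = sgn a * sgn b.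
Proof. by rewrite /sgn expfzDr // oppr_eq0 oner_eq0. Qed.

Lemma sgn0 : sgn 0 = 1. Proof. by []. Qed.
Lemma sgn1 : sgn 1 = -1. Proof. by rewrite /sgn expr1z. Qed.

Lemma sgn2 (k : int) : sgn (2 * k) = 1.
Proof. by rewrite /sgn -exprz_exp -exprnP expr2 mulrNN mulr1 exp1rz. Qed.

Lemma sgn_eq (a b k : int) : a = b + 2 * k -> sgn a = sgn b.
Proof. by move=> ->; rewrite sgnD sgn2 mulr1. Qed.

Lemma sgnK (a : int) : sgn a * sgn a = 1.
Proof. by rewrite -sgnD (@sgn_eq _ 0 a) //; ring. Qed.

Lemma sgnS (a : int) : sgn (a + 1) = - sgn a.
Proof. by rewrite sgnD sgn1 mulrN1. Qed.

Section Lin.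
Variables (U V : lmodType rat) (f : U -> V) (hf : is_linear f).
Lemma linD u v : f (u + v) = f u + f v.
Proof. by have := hf 1 u v; rewrite !scale1r. Qed.
Lemma lin0 : f 0 = 0.
Proof. by apply: (@addrI _ (f 0)); rewrite -linD !addr0. Qed.
Lemma linZ r u : f (r *: u) = r *: f u.
Proof. by rewrite -[r *: u]addr0 hf lin0 addr0. Qed.
Lemma linN u : f (- u) = - f u.
Proof. by rewrite -scaleN1r linZ scaleN1r. Qed.
Lemma linB u v : f (u - v) = f u - f v.
Proof. by rewrite linD linN. Qed.
Lemma lin_sum (I : Type) (r : seq I) (P : pred I) (F : I -> U) :
  f (\sum_(i <- r | P i) F i) = \sum_(i <- r | P i) f (F i).
Proof. exact: (big_morph f linD lin0). Qed.
End Lin.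

Lemma lin_comp (U V W : lmodType rat) (f : U -> V) (g : V -> W) :
  is_linear f -> is_linear g -> is_linear (fun x => g (f x)).
Proof. by move=> hf hg r u v; rewrite hf hg. Qed.

Section Span.
Variables (V : lmodType rat).
Implicit Types (P Q : V -> Prop).

Lemma span_ind P (Q : V -> Prop) : Q 0 ->
  (forall r v y, P v -> Q y -> Q (r *: v + y)) -> forall x, span P x -> Q x.
Proof.
move=> Q0 QS x [s [Hs ->]]; elim: s Hs => [|p s IH] Hs; first by rewrite big_nil.
rewrite big_cons; apply: QS; first by apply: Hs; rewrite mem_head.
by apply: IH => p' hp'; apply: Hs; rewrite in_cons hp' orbT.
Qed.

Lemma span0 P : span P 0.
Proof. by exists [::]; rewrite big_nil. Qed.

Lemma span_cons P r v y : P v -> span P y -> span P (r *: v + y).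
Proof.
move=> Pv [s [Hs ->]]; exists ((r, v) :: s); split; last by rewrite big_cons.
by move=> p; rewrite in_cons => /orP[/eqP -> //|]; apply: Hs.
Qed.

Lemma span_gen P v : P v -> span P v.
Proof. by move=> Pv; rewrite -[v]scale1r -[_ *: v]addr0; apply: span_cons => //; apply: span0. Qed.

Lemma spanZD P r x y : span P x -> span P y -> span P (r *: x + y).
Proof.
move=> sx; elim/span_ind: sx y => [|r' v x' Pv IH] y sy; first by rewrite scaler0 add0r.
by rewrite scalerDr scalerA -addrA; apply: span_cons => //; apply: IH.
Qed.

Lemma spanD P x y : span P x -> span P y -> span P (x + y).
Proof. by move=> sx sy; rewrite -[x]scale1r; apply: spanZD. Qed.
Lemma spanZ P r x : span P x -> span P (r *: x).
Proof. by move=> sx; rewrite -[_ *: x]addr0; apply: spanZD => //; apply: span0. Qed.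
Lemma spanN P x : span P x -> span P (- x).
Proof. by move=> sx; rewrite -scaleN1r; apply: spanZ. Qed.
Lemma spanB P x y : span P x -> span P y -> span P (x - y).
Proof. by move=> sx sy; apply: spanD => //; apply: spanN. Qed.
Lemma span_sum P (I : Type) (r : seq I) (Pr : pred I) (F : I -> V) :
  (forall i, Pr i -> span P (F i)) -> span P (\sum_(i <- r | Pr i) F i).
Proof.
move=> H; elim: r => [|i r IH]; first by rewrite big_nil; apply: span0.
by rewrite big_cons; case: ifP => // Pi; apply: spanD => //; apply: H.
Qed.

Lemma span_mono P Q x : (forall v, P v -> Q v) -> span P x -> span Q x.
Proof.
move=> PQ; elim/span_ind => [|r v y Pv sy]; first exact: span0.
by apply: span_cons => //; apply: PQ.
Qed.

Lemma span_span P x : span (span P) x -> span P x.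
Proof.
elim/span_ind => [|r v y Pv sy]; first exact: span0.
exact: spanZD.
Qed.
End Span.


Lemma span_lin (U V : lmodType rat) (f : U -> V) P Q x :
  is_linear f -> (forall v, P v -> span Q (f v)) -> span P x -> span Q (f x).
Proof.
move=> hf H sx; elim/span_ind: sx => [|r v y Pv sy]; first by rewrite lin0 //; apply: span0.
by rewrite hf; apply: spanZD => //; apply: H.
Qed.

Lemma span_bil (U W V : lmodType rat) (br : U -> W -> V) P Q R x y :
  is_bilinear br -> (forall u v, P u -> Q v -> span R (br u v)) ->
  span P x -> span Q y -> span R (br x y).
Proof.
move=> [hb1 hb2] H sx sy.
apply: (@span_lin _ _ (fun u => br u y) P R x (hb2 y) _ sx) => u Pu.
by apply: (@span_lin _ _ (br u) Q R y (hb1 u) _ sy) => v Qv; apply: H.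
Qed.

Lemma span_ext (U V : lmodType rat) (f g : U -> V) P x :
  is_linear f -> is_linear g -> (forall v, P v -> f v = g v) -> span P x -> f x = g x.
Proof.
move=> hf hg H sx; elim/span_ind: sx => [|r v y Pv IH]; first by rewrite !lin0.
by rewrite hf hg IH H.
Qed.

Lemma sum_rev (V : nmodType) k (F : nat -> nat -> V) :
  \sum_(0 <= a < k.+1) F a (k - a)%N = \sum_(0 <= a < k.+1) F (k - a)%N a.
Proof.
rewrite big_nat_rev; apply: eq_big_nat => a /andP[_ ha].
by rewrite add0n subSS subKn.
Qed.

Lemma sum_tri (V : nmodType) (f : nat -> nat -> V) n :
  \sum_(0 <= k < n) \sum_(0 <= a < k.+1) f a (k - a)%N =
  \sum_(0 <= a < n) \sum_(0 <= c < n - a) f a c.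
Proof.
elim: n => [|n IH]; first by rewrite !big_geq.
rewrite big_nat_recr //= IH.
have -> : \sum_(0 <= a < n.+1) \sum_(0 <= c < n.+1 - a) f a c =
   \sum_(0 <= a < n.+1) (\sum_(0 <= c < n - a) f a c + f a (n - a)%N).
  apply: eq_big_nat => a /andP[_ ha]; rewrite subSn // big_nat_recr //.
rewrite big_split /= [X in _ = X + _]big_nat_recr //= subnn [\sum_(0 <= c < 0) _]big_geq // addr0.
by []. Qed.

Lemma sum_square (V : nmodType) (f : nat -> nat -> V) K :
  (forall a c, (K <= a)%N || (K <= c)%N -> f a c = 0) ->
  \sum_(0 <= a < K) \sum_(0 <= c < K) f a c =
  \sum_(0 <= k < K + K) \sum_(0 <= a < k.+1) f a (k - a)%N.
Proof.
move=> f0; rewrite sum_tri [in RHS](@big_cat_nat _ _ _ K 0 (K+K)) ?leq_addr //=.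
rewrite [X in _ = _ + X]big1_seq ?addr0; last first.
  move=> a /andP[_]; rewrite mem_index_iota => /andP[Ka _].
  by apply: big1 => c _; apply: f0; apply/orP; left.
apply: eq_big_nat => a /andP[_ aK].
rewrite [in RHS](@big_cat_nat _ _ _ K 0 (K+K-a)) //=; last by rewrite leq_subRL ?leq_add2r // ltnW // (leq_trans aK) // leq_addr.
rewrite [X in _ = _ + X]big1_seq ?addr0 //.
by move=> c /andP[_]; rewrite mem_index_iota => /andP[Kc _]; apply: f0; apply/orP; right.
Qed.

Section Gauge.
Variables (T : lmodType rat) (br : T -> T -> T) (d : T -> T) (D : int -> T -> Prop).
Hypotheses (hbr : is_bilinear br) (hd : is_linear d)
 (D0 : forall n, D n 0) (DZD : forall n r x y, D n x -> D n y -> D n (r *: x + y))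
 (Dbr : forall i j x y, D i x -> D j y -> D (i + j) (br x y))
 (Dd : forall i x, D i x -> D (i + 1) (d x))
 (anti : forall i j x y, D i x -> D j y -> br x y = - (sgn (i * j) *: br y x))
 (jac : forall i j k x y w, D i x -> D j y -> D k w ->
     br x (br y w) = br (br x y) w + sgn (i * j) *: br y (br x w))
 (leib : forall i j x y, D i x -> D j y -> d (br x y) = br (d x) y + sgn i *: br x (d y))
 (dd : forall i x, D i x -> d (d x) = 0).

Lemma brDl x y w : br (x + y) w = br x w + br y w. Proof. exact: (linD (hbr.2 w)). Qed.
Lemma brZl r x w : br (r *: x) w = r *: br x w. Proof. exact: (linZ (hbr.2 w)). Qed.
Lemma brNl x w : br (- x) w = - br x w. Proof. exact: (linN (hbr.2 w)). Qed.
Lemma br0l w : br 0 w = 0. Proof. exact: (lin0 (hbr.2 w)). Qed.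
Lemma brDr x y w : br w (x + y) = br w x + br w y. Proof. exact: (linD (hbr.1 w)). Qed.
Lemma brZr r x w : br w (r *: x) = r *: br w x. Proof. exact: (linZ (hbr.1 w)). Qed.
Lemma brNr x w : br w (- x) = - br w x. Proof. exact: (linN (hbr.1 w)). Qed.
Lemma br0r w : br w 0 = 0. Proof. exact: (lin0 (hbr.1 w)). Qed.
Lemma brsuml (I : Type) (r : seq I) (P : pred I) (F : I -> T) w :
  br (\sum_(i <- r | P i) F i) w = \sum_(i <- r | P i) br (F i) w.
Proof. exact: (lin_sum (hbr.2 w)). Qed.
Lemma brsumr (I : Type) (r : seq I) (P : pred I) (F : I -> T) w :
  br w (\sum_(i <- r | P i) F i) = \sum_(i <- r | P i) br w (F i).
Proof. exact: (lin_sum (hbr.1 w)). Qed.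

Lemma DD n x y : D n x -> D n y -> D n (x + y).
Proof. by move=> hx hy; rewrite -[x]scale1r; apply: DZD. Qed.
Lemma DZ n r x : D n x -> D n (r *: x).
Proof. by move=> hx; rewrite -[r *: x]addr0; apply: DZD. Qed.
Lemma Dsum n (I : Type) (r : seq I) (P : pred I) (F : I -> T) :
  (forall i, P i -> D n (F i)) -> D n (\sum_(i <- r | P i) F i).
Proof.
move=> H; elim: r => [|i r IH]; first by rewrite big_nil.
by rewrite big_cons; case: ifP => // Pi; apply: DD => //; apply: H.
Qed.

Variables (X alpha : T) (M : nat).
Hypotheses (hX : D 0 X) (halpha : D 1 alpha)
  (hM : iter M (br X) (d X + br alpha X) = 0).

Let y := d X + br alpha X.
Let Y i := iter i (br X) y.

Lemma Dy : D 1 y.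
Proof.
apply: DD; first by have := Dd hX; rewrite add0r.
by have := Dbr halpha hX; rewrite addr0.
Qed.

Lemma DY i : D 1 (Y i).
Proof.
elim: i => [|i IH] /=; first exact: Dy.
by have := Dbr hX IH; rewrite add0r.
Qed.

Lemma Y_ge i : (M <= i)%N -> Y i = 0.
Proof.
move=> Mi; rewrite /Y -(subnK Mi) iterD hM.
by elim: (i - M)%N => [|n IH] //=; rewrite IH br0r.
Qed.

Definition bb (k : nat) : T :=
  if k is k'.+1 then - ((k'.+1)`!%:R^-1 : rat) *: Y k' else alpha.

Lemma Dbb k : D 1 (bb k).
Proof. by case: k => [|k] //=; apply: DZ; apply: DY. Qed.

Lemma bb_ge k : (M < k)%N -> bb k = 0.
Proof. by case: k => [|k] //= Mk; rewrite Y_ge // scaler0. Qed.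

Definition ee (k : nat) : T := (if k is 0 then d X else 0) + br (bb k) X.

Lemma anti10 u : D 1 u -> br u X = - br X u.
Proof. by move=> hu; rewrite (anti hu hX) mulr0 sgn0 scale1r. Qed.

Lemma bb0 : bb 0 = alpha. Proof. by []. Qed.
Lemma bbS k : bb k.+1 = - ((k.+1)`!%:R^-1 : rat) *: Y k. Proof. by []. Qed.
Lemma ee0 : ee 0 = d X + br alpha X. Proof. by []. Qed.
Lemma eeS k : ee k.+1 = br (bb k.+1) X. Proof. by rewrite /ee add0r. Qed.
Lemma YS k : Y k.+1 = br X (Y k). Proof. by []. Qed.
Lemma Y0 : Y 0 = d X + br alpha X. Proof. by []. Qed.

Lemma EE k : (k.+1)%:R *: bb k.+1 = - ee k.
Proof.
case: k => [|k].
  by rewrite bbS ee0 Y0 scale1r invr1 scaleN1r.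
rewrite eeS !bbS YS brZl (anti10 (DY k)) scalerN opprK scalerA.
congr (_ *: _).
rewrite mulrN [(k.+2)`!]factS natrM invfM mulrA divff ?mul1r //.
by rewrite pnatr_eq0.
Qed.

Definition gg (k : nat) : T :=
  d (bb k) + 2%:R^-1 *: \sum_(0 <= a < k.+1) br (bb a) (bb (k - a)).

Lemma br_sym11 u v : D 1 u -> D 1 v -> br u v = br v u.
Proof. by move=> hu hv; rewrite (anti hu hv) mulr1 sgn1 scaleN1r opprK. Qed.

Lemma gg0 : gg 0 = MC_F br d alpha.
Proof. by rewrite /gg big_nat1. Qed.

Lemma dee k : d (ee k) = br (d (bb k)) X - br (bb k) (d X).
Proof.
rewrite /ee (linD hd) (leib (Dbb k) hX) sgn1 scaleN1r.
by case: k => [|k] /=; rewrite ?(dd hX) ?(lin0 hd) add0r.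
Qed.

Lemma S2 k : (k.+1)%:R *: \sum_(0 <= a < k.+2) br (bb a) (bb (k.+1 - a)) =
  2%:R *: \sum_(0 <= a < k.+1) br (bb a) ((k - a).+1%:R *: bb (k - a).+1).
Proof.
rewrite scaler_sumr.
have -> : \sum_(0 <= a < k.+2) (k.+1)%:R *: br (bb a) (bb (k.+1 - a)) =
  \sum_(0 <= a < k.+2) (a%:R *: br (bb a) (bb (k.+1 - a))) +
  \sum_(0 <= a < k.+2) ((k.+1 - a)%:R *: br (bb a) (bb (k.+1 - a))).
  rewrite -big_split /=; apply: eq_big_nat => a /andP[_ ha].
  by rewrite -scalerDl -natrD subnKC.
have -> : \sum_(0 <= a < k.+2) (a%:R *: br (bb a) (bb (k.+1 - a))) =
  \sum_(0 <= a < k.+2) ((k.+1 - a)%:R *: br (bb a) (bb (k.+1 - a))).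
  rewrite big_nat_rev; apply: eq_big_nat => a /andP[_ ha].
  rewrite add0n subSS subKn //; congr (_ *: _).
  by apply: br_sym11; apply: Dbb.
rewrite -mulr2n -scaler_nat; congr (_ *: _).
rewrite big_nat_recr //= subnn scale0r addr0.
apply: eq_big_nat => a /andP[_ ha].
by rewrite brZr subSn.
Qed.

Lemma RR k : (k.+1)%:R *: gg k.+1 = br X (gg k).
Proof.
rewrite /gg scalerDr -(linZ hd) EE (linN hd) dee.
rewrite scalerA mulrC -scalerA S2 scalerA mulVf ?pnatr_eq0 // scale1r.
have -> : \sum_(0 <= a < k.+1) br (bb a) ((k - a).+1%:R *: bb (k - a).+1) =
   - br (bb k) (d X) - \sum_(0 <= a < k.+1) br (bb a) (br (bb (k - a)) X).
  have -> : \sum_(0 <= a < k.+1) br (bb a) ((k - a).+1%:R *: bb (k - a).+1) =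
     - \sum_(0 <= a < k.+1) (br (bb a) (if (k - a)%N is 0 then d X else 0) +
                              br (bb a) (br (bb (k - a)) X)).
    rewrite -sumrN; apply: eq_big_nat => a _.
    by rewrite EE brNr -brDr.
  rewrite big_split /= opprD; congr (_ - _).
  rewrite big_nat_recr //= subnn big1_seq ?add0r //.
  move=> a /andP[_]; rewrite mem_index_iota => /andP[_ ak].
  by rewrite -(subnSK ak) br0r.
rewrite brDr brZr brsumr.
have hW : \sum_(0 <= a < k.+1) br X (br (bb a) (bb (k - a))) =
   - (2%:R *: \sum_(0 <= a < k.+1) br (bb a) (br (bb (k - a)) X)).
  have -> : \sum_(0 <= a < k.+1) br X (br (bb a) (bb (k - a))) =
     \sum_(0 <= a < k.+1) (- br (bb (k - a)) (br (bb a) X) - br (bb a) (br (bb (k - a)) X)).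
    apply: eq_big_nat => a _.
    have Da := Dbb a; have Dk := Dbb (k - a).
    rewrite (jac hX Da Dk) mul0r sgn0 scale1r.
    have DXa : D 1 (br X (bb a)) by have := Dbr hX Da; rewrite add0r.
    rewrite (br_sym11 DXa Dk).
    have -> : br X (bb a) = - br (bb a) X by rewrite (anti10 Da) opprK.
    have -> : br X (bb (k - a)) = - br (bb (k - a)) X by rewrite (anti10 Dk) opprK.
    by rewrite !brNr.
  rewrite big_split /= sumrN.
  rewrite (sum_rev k (fun a c => br (bb c) (br (bb a) X))) /=.
  by rewrite sumrN scaler_nat mulr2n opprD.
rewrite hW scalerN scalerA mulVf ?pnatr_eq0 // scale1r.
have -> : br X (d (bb k)) = - br (d (bb k)) X.
  by rewrite (anti hX (Dd (Dbb k))) mul0r sgn0 scale1r.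
by rewrite opprB addrA (addrC (br (bb k) (d X))) addrK.
Qed.

Lemma gg_S k : br X (MC_F br d alpha) = 0 -> gg k.+1 = 0.
Proof.
move=> h; elim: k => [|k IH].
  apply: (@scalerI _ _ (1%:R)); first by rewrite pnatr_eq0.
  by rewrite RR gg0 h scaler0.
apply: (@scalerI _ _ (k.+2%:R)); first by rewrite pnatr_eq0.
by rewrite RR IH br0r scaler0.
Qed.

Lemma gauge_sum : gauge br d M X alpha = \sum_(0 <= k < M.+1) bb k.
Proof.
rewrite big_nat_recl //= /gauge big_mkord -sumrN.
by congr (_ + _); apply: eq_bigr => i _; rewrite scaleNr.
Qed.

Lemma gauge_D : D 1 (gauge br d M X alpha).
Proof. by rewrite gauge_sum; apply: Dsum => k _; apply: Dbb. Qed.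

Lemma gauge_MC : br X (MC_F br d alpha) = 0 ->
  MC_F br d (gauge br d M X alpha) = MC_F br d alpha.
Proof.
move=> h; rewrite gauge_sum /MC_F.
have -> : br (\sum_(0 <= k < M.+1) bb k) (\sum_(0 <= k < M.+1) bb k) =
  \sum_(0 <= a < M.+1) \sum_(0 <= c < M.+1) br (bb a) (bb c).
  by rewrite brsuml; apply: eq_bigr => a _; rewrite brsumr.
rewrite (@sum_square _ (fun a c => br (bb a) (bb c)) M.+1); last first.
  by move=> a c /orP[hK|hK]; [rewrite (bb_ge hK) br0l | rewrite (bb_ge hK) br0r].
rewrite (lin_sum hd).
have -> : \sum_(0 <= k < M.+1) d (bb k) = \sum_(0 <= k < M.+1 + M.+1) d (bb k).
  rewrite [in RHS](@big_cat_nat _ _ _ M.+1) ?leq_addr //= [X in _ = _ + X]big1_seq ?addr0 //.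
  move=> a /andP[_]; rewrite mem_index_iota => /andP[ha _].
  by rewrite bb_ge // (lin0 hd).
rewrite scaler_sumr -big_split /=.
rewrite (eq_bigr gg) //.
rewrite big_nat_recl // gg0 big1 ?addr0 //.
by move=> i _; apply: gg_S.
Qed.

End Gauge.

Lemma linA (U V : lmodType rat) (f g : U -> V) :
  is_linear f -> is_linear g -> is_linear (fun x => f x + g x).
Proof.
move=> hf hg r u v; rewrite hf hg scalerDr.
by rewrite -!addrA; congr (_ + _); rewrite addrCA.
Qed.
Lemma linS (U V : lmodType rat) (c : rat) (f : U -> V) :
  is_linear f -> is_linear (fun x => c *: f x).
Proof. by move=> hf r u v; rewrite hf scalerDr !scalerA mulrC. Qed.
Lemma linO (U V : lmodType rat) (f : U -> V) :
  is_linear f -> is_linear (fun x => - f x).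
Proof. by move=> hf r u v; rewrite hf opprD scalerN. Qed.
Lemma linI (U : lmodType rat) : is_linear (fun x : U => x).
Proof. by []. Qed.

Lemma span_ext2 (U1 U2 V : lmodType rat) (f g : U1 -> U2 -> V) P Q x y :
  (forall y, is_linear (fun x => f x y)) -> (forall x, is_linear (f x)) ->
  (forall y, is_linear (fun x => g x y)) -> (forall x, is_linear (g x)) ->
  (forall u v, P u -> Q v -> f u v = g u v) -> span P x -> span Q y -> f x y = g x y.
Proof.
move=> f1 f2 g1 g2 H sx sy.
apply: (@span_ext _ _ (fun x => f x y) (fun x => g x y) P x) => // u Pu.
by apply: (@span_ext _ _ (f u) (g u) Q y) => // v Qv; apply: H.
Qed.

Lemma span_ext3 (U1 U2 U3 V : lmodType rat) (f g : U1 -> U2 -> U3 -> V) P Q R x y z :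
  (forall y z, is_linear (fun x => f x y z)) -> (forall x z, is_linear (fun y => f x y z)) ->
  (forall x y, is_linear (f x y)) ->
  (forall y z, is_linear (fun x => g x y z)) -> (forall x z, is_linear (fun y => g x y z)) ->
  (forall x y, is_linear (g x y)) ->
  (forall u v w, P u -> Q v -> R w -> f u v w = g u v w) ->
  span P x -> span Q y -> span R z -> f x y z = g x y z.
Proof.
move=> f1 f2 f3 g1 g2 g3 H sx sy sz.
apply: (@span_ext _ _ (fun x => f x y z) (fun x => g x y z) P x) => // u Pu.
apply: (@span_ext _ _ (fun y => f u y z) (fun y => g u y z) Q y) => // v Qv.
by apply: (@span_ext _ _ (f u v) (g u v) R z) => // w Rw; apply: H.
Qed.

Section Tens.
Variables (A : lmodType rat) (degA : int -> A -> Prop) (mulA : A -> A -> A) (oneA : A)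
  (dA : A -> A) (L : lmodType rat) (degL : int -> L -> Prop) (brL : L -> L -> L)
  (dL : L -> L) (T : lmodType rat) (t : A -> L -> T) (brT : T -> T -> T) (dT : T -> T).
Hypotheses (hA : is_cdga degA mulA oneA dA) (hL : is_dgla degL brL dL)
  (ht : is_bilinear t) (hTd : is_tensor_dgla degA mulA dA degL brL dL t brT dT).

Lemma degA_lin i r u v : degA i u -> degA i v -> degA i (r *: u + v).
Proof. by case: hA => [[[_ H _ _] _ _ _ _] _]; apply: H. Qed.
Lemma degA_mul i j a b : degA i a -> degA j b -> degA (i + j) (mulA a b).
Proof. by case: hA => _ [H _ _]; apply: H. Qed.
Lemma mulA_comm i j a b : degA i a -> degA j b -> mulA a b = sgn (i * j) *: mulA b a.
Proof. by case: hA => _ [_ H _]; apply: H. Qed.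
Lemma mulA_assoc a b c : mulA a (mulA b c) = mulA (mulA a b) c.
Proof. by case: hA => [[_ _ _ H _] _]; apply: H. Qed.
Lemma bilA : is_bilinear mulA.
Proof. by case: hA => [[_ _ H _ _] _]. Qed.
Lemma lindA : is_linear dA.
Proof. by case: hA => _ [_ _ [H _ _ _]]. Qed.
Lemma degA_d i a : degA i a -> degA (i + 1) (dA a).
Proof. by case: hA => _ [_ _ [_ H _ _]]; apply: H. Qed.
Lemma ddA a : dA (dA a) = 0.
Proof. by case: hA => _ [_ _ [_ _ H _]]; apply: H. Qed.
Lemma leibA i a b : degA i a -> dA (mulA a b) = mulA (dA a) b + sgn i *: mulA a (dA b).
Proof. by case: hA => _ [_ _ [_ _ _ H]]; apply: H. Qed.

Lemma bilL : is_bilinear brL.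
Proof. by case: hL => [[_ H _ _ _] _]. Qed.
Lemma degL_br i j x y : degL i x -> degL j y -> degL (i + j) (brL x y).
Proof. by case: hL => [[_ _ H _ _] _]; apply: H. Qed.
Lemma antiL i j x y : degL i x -> degL j y -> brL x y = - (sgn (i * j) *: brL y x).
Proof. by case: hL => [[_ _ _ H _] _]; apply: H. Qed.
Lemma jacL i j x y z : degL i x -> degL j y ->
  brL x (brL y z) = brL (brL x y) z + sgn (i * j) *: brL y (brL x z).
Proof. by case: hL => [[_ _ _ _ H] _]; apply: H. Qed.
Lemma lindL : is_linear dL.
Proof. by case: hL => _ [H _ _ _]. Qed.
Lemma degL_d i x : degL i x -> degL (i + 1) (dL x).
Proof. by case: hL => _ [_ H _ _]; apply: H. Qed.
Lemma ddL x : dL (dL x) = 0.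
Proof. by case: hL => _ [_ _ H _]; apply: H. Qed.
Lemma leibL i x y : degL i x -> dL (brL x y) = brL (dL x) y + sgn i *: brL x (dL y).
Proof. by case: hL => _ [_ _ _ H]; apply: H. Qed.

Lemma bilT : is_bilinear brT.
Proof. by case: hTd. Qed.
Lemma lindT : is_linear dT.
Proof. by case: hTd. Qed.
Lemma brT_t i1 j1 i2 j2 b1 w1 b2 w2 : degA i1 b1 -> degL j1 w1 ->
  degA i2 b2 -> degL j2 w2 ->
  brT (t b1 w1) (t b2 w2) = sgn (j1 * i2) *: t (mulA b1 b2) (brL w1 w2).
Proof. by case: hTd => _ _ H _; apply: H. Qed.
Lemma dT_t i j b w : degA i b -> degL j w -> dT (t b w) = t (dA b) w + sgn i *: t b (dL w).
Proof. by case: hTd => _ _ _ H; apply: H. Qed.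

Lemma tZl r a w : t (r *: a) w = r *: t a w. Proof. exact: (linZ (ht.2 w)). Qed.
Lemma tZr r a w : t a (r *: w) = r *: t a w. Proof. exact: (linZ (ht.1 a)). Qed.
Lemma tDl a b w : t (a + b) w = t a w + t b w. Proof. exact: (linD (ht.2 w)). Qed.
Lemma tDr a w v : t a (w + v) = t a w + t a v. Proof. exact: (linD (ht.1 a)). Qed.
Lemma tNr a w : t a (- w) = - t a w. Proof. exact: (linN (ht.1 a)). Qed.
Lemma tNl a w : t (- a) w = - t a w. Proof. exact: (linN (ht.2 w)). Qed.
Lemma t0l w : t 0 w = 0. Proof. exact: (lin0 (ht.2 w)). Qed.
Lemma t0r a : t a 0 = 0. Proof. exact: (lin0 (ht.1 a)). Qed.

Lemma mulAZl r a b : mulA (r *: a) b = r *: mulA a b. Proof. exact: (linZ (bilA.2 b)). Qed.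
Lemma mulAZr r a b : mulA a (r *: b) = r *: mulA a b. Proof. exact: (linZ (bilA.1 a)). Qed.

Definition gen (n : int) (v : T) : Prop := exists i j a w,
  [/\ 0 < i, i + j = n, degA i a, degL j w & v = t a w].

Local Notation G := (tdeg_pos degA degL t).

Lemma G0 n : G n 0. Proof. exact: span0. Qed.
Lemma GZD n r x y : G n x -> G n y -> G n (r *: x + y). Proof. exact: spanZD. Qed.

Lemma G_br i j x y : G i x -> G j y -> G (i + j) (brT x y).
Proof.
apply: span_bil; first exact: bilT.
move=> u v [i1 [j1 [a [w [pi1 Hi ha hw ->]]]]] [i2 [j2 [b [v' [pi2 Hj hb hv ->]]]]].
rewrite (brT_t ha hw hb hv); apply: spanZ; apply: span_gen.
exists (i1 + i2), (j1 + j2), (mulA a b), (brL w v'); split => //.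
- exact: addr_gt0.
- by rewrite -Hi -Hj; ring.
- exact: degA_mul.
- exact: degL_br.
Qed.

Lemma G_d i x : G i x -> G (i + 1) (dT x).
Proof.
apply: span_lin; first exact: lindT.
move=> u [i1 [j1 [a [w [pi1 Hi ha hw ->]]]]].
rewrite (dT_t ha hw); apply: spanD; [apply: span_gen | apply: spanZ; apply: span_gen].
- exists (i1 + 1), j1, (dA a), w; split => //.
  + by apply: addr_gt0.
  + by rewrite -Hi; ring.
  + exact: degA_d.
- exists i1, (j1 + 1), a, (dL w); split => //.
  + by rewrite -Hi; ring.
  + exact: degL_d.
Qed.

Lemma G_anti i j x y : G i x -> G j y -> brT x y = - (sgn (i * j) *: brT y x).
Proof.
apply: (@span_ext2 _ _ _ brT (fun x y => - (sgn (i * j) *: brT y x))).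
- by move=> y'; apply: (bilT.2 y').
- by move=> x'; apply: (bilT.1 x').
- by move=> y'; apply: linO; apply: linS; apply: (bilT.1 y').
- by move=> x'; apply: linO; apply: linS; apply: (bilT.2 x').
move=> u v [i1 [j1 [a [w [pi1 Hi ha hw ->]]]]] [i2 [j2 [b [v' [pi2 Hj hb hv ->]]]]].
rewrite (brT_t ha hw hb hv) (brT_t hb hv ha hw) (mulA_comm ha hb) (antiL hw hv).
rewrite tZl tNr tZr !scalerN !scalerA; congr (- (_ *: _)).
rewrite -!sgnD; subst i j; apply: (@sgn_eq _ _ (- (i1 * j2))); ring.
Qed.

Lemma G_jac i j k x y z : G i x -> G j y -> G k z ->
  brT x (brT y z) = brT (brT x y) z + sgn (i * j) *: brT y (brT x z).
Proof.
apply: (@span_ext3 _ _ _ _ (fun x y z => brT x (brT y z))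
   (fun x y z => brT (brT x y) z + sgn (i * j) *: brT y (brT x z))).
- by move=> y' z'; exact: (bilT.2 (brT y' z')).
- by move=> x' z'; exact: (lin_comp (bilT.2 z') (bilT.1 x')).
- by move=> x' y'; exact: (lin_comp (bilT.1 y') (bilT.1 x')).
- by move=> y' z'; exact: (linA (lin_comp (bilT.2 y') (bilT.2 z'))
                                 (linS _ (lin_comp (bilT.2 z') (bilT.1 y')))).
- by move=> x' z'; exact: (linA (lin_comp (bilT.1 x') (bilT.2 z'))
                                 (linS _ (bilT.2 (brT x' z')))).
- by move=> x' y'; exact: (linA (bilT.1 (brT x' y'))
                                 (linS _ (lin_comp (bilT.1 x') (bilT.1 y')))).
move=> u v u2 [i1 [j1 [a [w [pi1 Hi ha hw ->]]]]] [i2 [j2 [b [v' [pi2 Hj hb hv ->]]]]]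
  [i3 [j3 [c [u' [pi3 Hk hc hu ->]]]]].
rewrite (brT_t hb hv hc hu) (linZ (bilT.1 _)).
rewrite (brT_t ha hw (degA_mul hb hc) (degL_br hv hu)).
rewrite (brT_t ha hw hb hv) (linZ (bilT.2 _)).
rewrite (brT_t (degA_mul ha hb) (degL_br hw hv) hc hu).
rewrite (brT_t ha hw hc hu) (linZ (bilT.1 _)).
rewrite (brT_t hb hv (degA_mul ha hc) (degL_br hw hu)).
rewrite (mulA_assoc a b c) (mulA_assoc b a c) (mulA_comm hb ha) mulAZl.
rewrite (jacL _ hw hv) tDr !tZr tZl !scalerDr !scalerA.
congr (_ *: _ + _ *: _).
  by rewrite -!sgnD; subst i j k; apply: (@sgn_eq _ _ 0); ring.
by rewrite -!sgnD; subst i j k; apply: (@sgn_eq _ _ (- (i1 * i2 + i1 * j2))); ring.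
Qed.

Lemma G_leib i j x y : G i x -> G j y ->
  dT (brT x y) = brT (dT x) y + sgn i *: brT x (dT y).
Proof.
apply: (@span_ext2 _ _ _ (fun x y => dT (brT x y))
   (fun x y => brT (dT x) y + sgn i *: brT x (dT y))).
- by move=> y'; exact: (lin_comp (bilT.2 y') lindT).
- by move=> x'; exact: (lin_comp (bilT.1 x') lindT).
- by move=> y'; exact: (linA (lin_comp lindT (bilT.2 y')) (linS _ (bilT.2 (dT y')))).
- by move=> x'; exact: (linA (bilT.1 (dT x')) (linS _ (lin_comp lindT (bilT.1 x')))).
move=> u v [i1 [j1 [a [w [pi1 Hi ha hw ->]]]]] [i2 [j2 [b [v' [pi2 Hj hb hv ->]]]]].
rewrite (brT_t ha hw hb hv) (linZ lindT).
rewrite (dT_t (degA_mul ha hb) (degL_br hw hv)) (leibA _ ha) (leibL _ hw).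
rewrite (dT_t ha hw) (dT_t hb hv) (linD (bilT.2 _)) (linZ (bilT.2 _)).
rewrite (linD (bilT.1 _)) (linZ (bilT.1 _)).
rewrite (brT_t (degA_d ha) hw hb hv) (brT_t ha (degL_d hw) hb hv).
rewrite (brT_t ha hw (degA_d hb) hv) (brT_t ha hw hb (degL_d hv)).
rewrite tDl tDr !tZl !tZr !scalerDr !scalerA !addrA.
rewrite [X in _ = X + _]addrAC.
congr (_ *: _ + _ *: _ + _ *: _ + _ *: _).
- by rewrite -!sgnD; subst i j; apply: (@sgn_eq _ _ (- j1)); ring.
- by rewrite -!sgnD; subst i j; apply: (@sgn_eq _ _ 0); ring.
- by rewrite -!sgnD; subst i j; apply: (@sgn_eq _ _ 0); ring.
Qed.

Lemma G_dd i x : G i x -> dT (dT x) = 0.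
Proof.
apply: (@span_ext _ _ (fun x => dT (dT x)) (fun _ => 0)).
- exact: (lin_comp lindT lindT).
- by move=> r u v; rewrite scaler0 addr0.
move=> u [i1 [j1 [a [w [pi1 Hi ha hw ->]]]]].
rewrite (dT_t ha hw) (linD lindT) (linZ lindT).
rewrite (dT_t (degA_d ha) hw) (dT_t ha (degL_d hw)) ddA ddL t0l t0r add0r.
by rewrite scaler0 addr0 sgnS scaleNr addNr.
Qed.

Lemma T_gauge_MC X al M : G 0 X -> G 1 al ->
  iter M (brT X) (dT X + brT al X) = 0 -> brT X (MC_F brT dT al) = 0 ->
  MC_F brT dT (gauge brT dT M X al) = MC_F brT dT al.
Proof. exact: (gauge_MC bilT lindT G0 GZD G_br G_d G_anti G_jac G_leib G_dd). Qed.

Lemma T_gauge_D X al M : G 0 X -> G 1 al -> G 1 (gauge brT dT M X al).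
Proof. exact: (gauge_D G0 GZD G_br G_d). Qed.

Definition genl (n : nat) (m : int) (v : T) : Prop := exists i j a w,
  [/\ 0 < i, i + j = m, degA i a, degL j w & lcs brL n w /\ v = t a w].

Lemma genl_step n m X v : G 0 X -> span (genl n m) v -> span (genl n.+1 m) (brT X v).
Proof.
move=> hX; apply: span_lin; first exact: (bilT.1 X).
move=> u [i2 [j2 [b [w [pi2 Hj hb hw [hl ->]]]]]].
apply: (@span_lin _ _ (fun x => brT x (t b w)) _ _ X (bilT.2 _)) hX.
move=> u' [i1 [j1 [a [w0 [pi1 Hi ha hw0 ->]]]]].
rewrite (brT_t ha hw0 hb hw); apply: spanZ; apply: span_gen.
exists (i1 + i2), (j1 + j2), (mulA a b), (brL w0 w); split.
- exact: addr_gt0.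
- by lia.
- exact: degA_mul.
- exact: degL_br.
- by split => //; apply: span_gen; exists w0, w.
Qed.

Lemma G_nil K X v m : (forall u, lcs brL K u -> u = 0) -> G 0 X -> G m v ->
  iter K (brT X) v = 0.
Proof.
move=> hK hX hv.
have : span (genl K m) (iter K (brT X) v).
  elim: K {hK} => [|K IH] /=.
    apply: span_mono hv => u [i [j [a [w [? ? ? ? ->]]]]].
    by exists i, j, a, w; split.
  by apply: genl_step => //; apply: IH.
elim/span_ind => [//|r u y' [i [j [a [w [_ _ _ _ [hl ->]]]]]] IH].
by rewrite (hK _ hl) t0r scaler0 add0r.
Qed.

End Tens.

Section Grad.
Variables (V : lmodType rat) (deg : int -> V -> Prop) (hg : is_graded deg).

Lemma deg0 i : deg i 0. Proof. by case: hg. Qed.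
Lemma deg_lin i r u v : deg i u -> deg i v -> deg i (r *: u + v).
Proof. by case: hg => _ H _ _; apply: H. Qed.
Lemma degZ i r u : deg i u -> deg i (r *: u).
Proof. by move=> hu; rewrite -[_ *: u]addr0; apply: deg_lin => //; apply: deg0. Qed.
Lemma degD i u v : deg i u -> deg i v -> deg i (u + v).
Proof. by move=> hu hv; rewrite -[u]scale1r; apply: deg_lin. Qed.
Lemma deg_sum i (I : Type) (r : seq I) (P : pred I) (F : I -> V) :
  (forall k, P k -> deg i (F k)) -> deg i (\sum_(k <- r | P k) F k).
Proof.
move=> H; elim: r => [|k r IH]; first by rewrite big_nil; apply: deg0.
by rewrite big_cons; case: ifP => // Pk; apply: degD => //; apply: H.
Qed.

Lemma graded_filter (s : seq (int * V)) :
  (forall p, p \in s -> deg p.1 p.2) -> \sum_(p <- s) p.2 = 0 ->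
  forall i, \sum_(p <- s | p.1 == i) p.2 = 0.
Proof.
move=> hs s0 i.
pose I := undup (map fst s).
pose s' := [seq (j, \sum_(p <- s | p.1 == j) p.2) | j <- I].
have us' : uniq (map fst s') by rewrite -map_comp map_id_in ?undup_uniq.
have ds' : forall p, p \in s' -> deg p.1 p.2.
  move=> p /mapP[j _ ->] /=; rewrite big_seq_cond; apply: deg_sum => p' /andP[ps /eqP <-].
  by apply: hs.
have sum' : \sum_(p <- s') p.2 = 0.
  rewrite big_map /=; transitivity (\sum_(p <- s) p.2); last exact: s0.
  under eq_bigr do rewrite big_mkcond.
  rewrite exchange_big /=.
  apply: eq_big_seq => p ps.
  rewrite (bigD1_seq p.1) ?undup_uniq //=; last by rewrite mem_undup map_f.
  rewrite eqxx big1 ?addr0 // => j.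
  by rewrite eq_sym => /negbTE ->.
case: (boolP (i \in I)) => iI.
  case: hg => _ _ _ H4.
  have := (H4 s' us' ds' sum' (i, \sum_(p <- s | p.1 == i) p.2)).
  by apply; apply/mapP; exists i.
rewrite big1_seq // => p /andP[/eqP pi ps].
by move: iI; rewrite mem_undup -pi map_f.
Qed.
Lemma homog_proj i v (s : seq (int * V)) : deg i v ->
  (forall p, p \in s -> deg p.1 p.2) -> v = \sum_(p <- s) p.2 ->
  v = \sum_(p <- s | p.1 == i) p.2.
Proof.
move=> hv hs vs.
have h1 : forall p, p \in (i, - v) :: s -> deg p.1 p.2.
  move=> p; rewrite in_cons => /orP[/eqP -> /=|]; last by apply: hs.
  by rewrite -scaleN1r; apply: degZ.
have h2 : \sum_(p <- (i, - v) :: s) p.2 = 0 by rewrite big_cons /= -vs addNr.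
have := graded_filter h1 h2 i.
rewrite big_cons /= eqxx => /eqP; rewrite addrC subr_eq0 => /eqP ->.
by [].
Qed.

Lemma span_off q x : span (fun v => exists i, i != q /\ deg i v) x -> deg q x -> x = 0.
Proof.
move=> sx hx.
have [s [hs xs]] : exists s : seq (int * V),
    (forall p, p \in s -> deg p.1 p.2 /\ p.1 != q) /\ x = \sum_(p <- s) p.2.
  elim/span_ind: sx {hx} => [|r v y [i [iq hv]] [s [hs ->]]].
    by exists [::]; rewrite big_nil.
  exists ((i, r *: v) :: s); split; last by rewrite big_cons.
  move=> p; rewrite in_cons => /orP[/eqP -> /=|]; last by apply: hs.
  by split => //; apply: degZ.
rewrite (homog_proj hx _ xs); last by move=> p /hs[].
rewrite big1_seq // => p /andP[/eqP pq ps].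
by have [_] := hs p ps; rewrite pq eqxx.
Qed.

End Grad.

Lemma homog_lift (V W : lmodType rat) (degV : int -> V -> Prop) (degW : int -> W -> Prop)
  (hV : is_graded degV) (hW : is_graded degW) (f : V -> W) (hf : is_linear f)
  (fdeg : forall i v, degV i v -> degW i (f v)) (fsurj : forall w, exists v, f v = w)
  j w : degW j w -> exists v, degV j v /\ f v = w.
Proof.
move=> hw; have [u0 hu0] := fsurj w.
have [s [hs us]] : exists s : seq (int * V), (forall p, p \in s -> degV p.1 p.2) /\
   u0 = \sum_(p <- s) p.2 by case: hV => _ _ H _; apply: H.
exists (\sum_(p <- s | p.1 == j) p.2); split.
  rewrite big_seq_cond; apply: deg_sum => [//|p /andP[ps /eqP <-]]; exact: hs.
pose sW := [seq (p.1, f p.2) | p <- s].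
have hsW : forall p, p \in sW -> degW p.1 p.2.
  by move=> p /mapP[p' p's ->] /=; apply: fdeg; apply: hs.
have wsW : w = \sum_(p <- sW) p.2 by rewrite big_map -hu0 us (lin_sum hf).
rewrite (homog_proj hW hw hsW wsW) big_map (lin_sum hf).
by [].
Qed.

Lemma functional_exists (V : lmodType rat) (H : V -> Prop) (z : V) :
  ~ span H z -> exists phi : V -> rat^o, [/\ is_linear phi, phi z = 1 & forall h, H h -> phi h = 0].
Proof.
move=> nHz.
pose SP (S : V -> Prop) := span (fun v => H v \/ S v).
pose P := fun S : classical_sets.set V => ~ SP S z.
have [A [PA maxA]] : exists A, P A /\ forall B, classical_sets.proper A B -> ~ P B.
  apply: classical_sets.Zorn_bigcup => F FP Ftot hz.
  have key : forall x, SP (classical_sets.bigcup F (fun X => X)) x ->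
      span H x \/ exists S, F S /\ SP S x.
    move=> x; elim/span_ind => [|r v y hv IH]; first by left; apply: span0.
    case: hv => [Hv|[S' FS' S'v]].
      case: IH => [sy|[S [FS sy]]]; first by left; apply: span_cons.
      by right; exists S; split => //; apply: span_cons => //; left.
    case: IH => [sy|[S [FS sy]]].
      right; exists S'; split => //; apply: span_cons; first by right.
      by apply: span_mono sy => u hu; left.
    have [SS'|S'S] := Ftot S S' FS FS'.
      right; exists S'; split => //; apply: span_cons; first by right.
      by apply: span_mono sy => u [hu|hu]; [left|right; apply: SS'].
    right; exists S; split => //; apply: span_cons; first by right; apply: S'S.
    exact: sy.
  case: (key z hz) => [//|[S [FS sS]]].
  exact: (FP S FS sS).
have hA : forall v, A v \/ exists w r, SP A w /\ z = w + r *: v.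
  move=> v; case: (classic (A v)) => Av; [by left | right].
  pose B := fun x => A x \/ x = v.
  have pAB : classical_sets.proper A B.
    split; first by move=> x Ax; left.
    by move=> BA; apply: Av; apply: BA; right.
  have sB : SP B z by apply: NNPP; apply: maxA.
  elim/span_ind: sB => [|r v' y hv' [w [c [sw ->]]]].
    by exists 0, 0; split; [apply: span0 | rewrite scale0r addr0].
  case: hv' => [Hv'|[Av'|->]].
  - exists (r *: v' + w), c; split; last by rewrite addrA.
    by apply: span_cons => //; left.
  - exists (r *: v' + w), c; split; last by rewrite addrA.
    by apply: span_cons => //; right.
  - exists w, (r + c); split => //.
    by rewrite scalerDl addrCA.
have ex : forall v, exists c : rat, SP A (v - c *: z).
  move=> v; case: (hA v) => [Av|[w [r [sw zE]]]].
    by exists 0; rewrite scale0r subr0; apply: span_gen; right.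
  have r0 : r != 0.
    apply/eqP => r0; apply: PA; move: zE; rewrite r0 scale0r addr0 => ->; exact: sw.
  exists r^-1; have -> : v - r^-1 *: z = - (r^-1 *: w).
    by rewrite zE scalerDr scalerA mulVf // scale1r opprD addrA addrAC subrr add0r.
  by apply: spanN; apply: spanZ.
have uniq : forall v c1 c2, SP A (v - c1 *: z) -> SP A (v - c2 *: z) -> c1 = c2.
  move=> v c1 c2 s1 s2; apply/eqP; rewrite -subr_eq0; apply/negP => /negP c12.
  apply: PA.
  have -> : z = (c1 - c2)^-1 *: ((v - c2 *: z) - (v - c1 *: z)).
    have e : (v - c2 *: z) - (v - c1 *: z) = (c1 - c2) *: z.
      by rewrite scalerBl opprD opprK addrACA subrr add0r addrC.
    by rewrite e scalerA mulVf // scale1r.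
  by apply: spanZ; apply: spanB.
pose phi v := proj1_sig (constructive_indefinite_description _ (ex v)).
have hphi : forall v, SP A (v - phi v *: z).
  by move=> v; rewrite /phi; case: constructive_indefinite_description.
exists phi; split.
- move=> r u v; apply: (uniq (r *: u + v)); first exact: hphi.
  have -> : r *: u + v - (r * phi u + phi v) *: z =
     r *: (u - phi u *: z) + (v - phi v *: z).
    by rewrite scalerDl scalerBr scalerA opprD addrACA.
  by apply: spanZD; apply: hphi.
- apply: (uniq z); first exact: hphi.
  by rewrite scale1r subrr; apply: span0.
- move=> h Hh; apply: (uniq h); first exact: hphi.
  by rewrite scale0r subr0; apply: span_gen; left.
Qed.

Lemma gauge_ext (T : lmodType rat) (br : T -> T -> T) (d : T -> T) (N M : nat) X al :
  is_bilinear br -> (N <= M)%N -> iter N (br X) (d X + br al X) = 0 ->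
  gauge br d M X al = gauge br d N X al.
Proof.
move=> hbr NM hN; rewrite /gauge; congr (_ - _).
rewrite -!(big_mkord xpredT (fun i => ((i.+1)`!%:R^-1 : rat) *: iter i (br X) (d X + br al X))).
rewrite (big_cat_nat _ (n := N)) //= [X in _ + X]big1_seq ?addr0 // => i /andP[_].
rewrite mem_index_iota => /andP[Ni _].
rewrite -(subnK Ni) iterD hN.
suff -> : iter (i - N) (br X) 0 = 0 by rewrite scaler0.
by elim: (i - N)%N => [|n IH] //=; rewrite IH (lin0 (hbr.1 X)).
Qed.

Section Morph.
Variables (A : lmodType rat) (degA : int -> A -> Prop) (mulA : A -> A -> A) (oneA : A)
  (dA : A -> A) (L : lmodType rat) (degL : int -> L -> Prop) (brL : L -> L -> L)
  (dL : L -> L) (Lt : lmodType rat) (degLt : int -> Lt -> Prop) (brLt : Lt -> Lt -> Lt)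
  (dLt : Lt -> Lt) (pi : Lt -> L)
  (T : lmodType rat) (t : A -> L -> T) (brT : T -> T -> T) (dT : T -> T)
  (Tt : lmodType rat) (tt : A -> Lt -> Tt) (brTt : Tt -> Tt -> Tt) (dTt : Tt -> Tt)
  (P : Tt -> T).
Hypotheses (hA : is_cdga degA mulA oneA dA) (hL : is_dgla degL brL dL)
  (hLt : is_dgla degLt brLt dLt)
  (hpi : is_dgla_morphism degLt brLt dLt degL brL dL pi)
  (ht : is_bilinear t) (hTd : is_tensor_dgla degA mulA dA degL brL dL t brT dT)
  (htt : is_bilinear tt) (hTtd : is_tensor_dgla degA mulA dA degLt brLt dLt tt brTt dTt)
  (hP : is_linear P) (hPt : forall a u, P (tt a u) = t a (pi u)).

Local Notation G := (tdeg_pos degA degL t).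
Local Notation Gt := (tdeg_pos degA degLt tt).

Lemma pi_deg i u : degLt i u -> degL i (pi u).
Proof. by case: hpi => _ H _ _; apply: H. Qed.
Lemma pi_br u v : pi (brLt u v) = brL (pi u) (pi v).
Proof. by case: hpi => _ _ H _; apply: H. Qed.
Lemma pi_d u : pi (dLt u) = dL (pi u).
Proof. by case: hpi => _ _ _ H; apply: H. Qed.

Lemma P_G n x : Gt n x -> G n (P x).
Proof.
apply: span_lin => // u [i [j [a [w [pi1 Hi ha hw ->]]]]].
rewrite hPt; apply: span_gen; exists i, j, a, (pi w); split => //.
exact: pi_deg.
Qed.

Lemma P_br i j x y : Gt i x -> Gt j y -> P (brTt x y) = brT (P x) (P y).
Proof.
apply: (@span_ext2 _ _ _ (fun x y => P (brTt x y)) (fun x y => brT (P x) (P y))).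
- by move=> y'; exact: (lin_comp ((bilT hTtd).2 y') hP).
- by move=> x'; exact: (lin_comp ((bilT hTtd).1 x') hP).
- by move=> y'; exact: (lin_comp hP ((bilT hTd).2 (P y'))).
- by move=> x'; exact: (lin_comp hP ((bilT hTd).1 (P x'))).
move=> u v [i1 [j1 [a [w [pi1 Hi ha hw ->]]]]] [i2 [j2 [b [v' [pi2 Hj hb hv ->]]]]].
rewrite (brT_t hTtd ha hw hb hv) (linZ hP) !hPt pi_br.
by rewrite (brT_t hTd ha (pi_deg hw) hb (pi_deg hv)).
Qed.

Lemma P_d i x : Gt i x -> P (dTt x) = dT (P x).
Proof.
apply: (@span_ext _ _ (fun x => P (dTt x)) (fun x => dT (P x))).
- exact: (lin_comp (lindT hTtd) hP).
- exact: (lin_comp hP (lindT hTd)).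
move=> u [i1 [j1 [a [w [pi1 Hi ha hw ->]]]]].
rewrite (dT_t hTtd ha hw) (linD hP) (linZ hP) !hPt pi_d.
by rewrite (dT_t hTd ha (pi_deg hw)).
Qed.

Lemma P_gauge M X al : Gt 0 X -> Gt 1 al ->
  P (gauge brTt dTt M X al) = gauge brT dT M (P X) (P al).
Proof.
move=> hX hal; rewrite /gauge (linB hP) (lin_sum hP); congr (_ - _).
apply: eq_bigr => i _; rewrite (linZ hP); congr (_ *: _).
have hy : Gt 1 (dTt X + brTt al X).
  apply: spanD; first by have := G_d hA hLt hTtd hX; rewrite add0r.
  by have := G_br hA hLt hTtd hal hX; rewrite addr0.
elim: (nat_of_ord i) => [|n IH] /=.
  by rewrite (linD hP) (P_d hX) (P_br hal hX).
have hn : Gt 1 (iter n (brTt X) (dTt X + brTt al X)).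
  elim: n {IH} => [|n IHn] //=.
  by have := G_br hA hLt hTtd hX IHn; rewrite add0r.
by rewrite (P_br hX hn) IH.
Qed.

End Morph.

Unset Implicit Arguments.

Theorem lemma3p6
  (* the commutative DGA A *)
  (A : lmodType rat) (degA : int -> A -> Prop) (mulA : A -> A -> A) (oneA : A)
  (dA : A -> A) (hA : is_cdga degA mulA oneA dA)
  (* the DGLAs L~ and L *)
  (L : lmodType rat) (degL : int -> L -> Prop) (brL : L -> L -> L) (dL : L -> L)
  (hL : is_dgla degL brL dL) (nilL : nilpotent brL) (npL : concentrated_nonpos degL)
  (Lt : lmodType rat) (degLt : int -> Lt -> Prop) (brLt : Lt -> Lt -> Lt) (dLt : Lt -> Lt)
  (hLt : is_dgla degLt brLt dLt) (nilLt : nilpotent brLt)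
  (npLt : concentrated_nonpos degLt)
  (* the central extension 0 -> Z -> L~ -> L -> 0, with Z = Q z, z of degree q *)
  (pi : Lt -> L) (hpi : is_dgla_morphism degLt brLt dLt degL brL dL pi)
  (pi_surj : forall w : L, exists u : Lt, pi u = w)
  (q : int) (z : Lt) (z_neq0 : z != 0) (z_deg : degLt q z)
  (kerpi : forall u : Lt, pi u = 0 <-> exists c : rat, u = c *: z)
  (z_central : forall u : Lt, brLt z u = 0)
  (z_closed : dLt z = 0)
  (im_dLt_Z : forall (u : Lt) (c : rat), dLt u = c *: z -> c = 0)
  (* the DGLAs A (x) L and A (x) L~, and id (x) pi *)
  (T : lmodType rat) (t : A -> L -> T) (brT : T -> T -> T) (dT : T -> T)
  (hT : is_tensor t) (hTd : is_tensor_dgla degA mulA dA degL brL dL t brT dT)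
  (Tt : lmodType rat) (tt : A -> Lt -> Tt) (brTt : Tt -> Tt -> Tt) (dTt : Tt -> Tt)
  (hTt : is_tensor tt) (hTtd : is_tensor_dgla degA mulA dA degLt brLt dLt tt brTt dTt)
  (P : Tt -> T) (hP : is_linear P) (hPt : forall a u, P (tt a u) = t a (pi u))
  (* the defining system alpha and X in (A^+ (x) L)^0 *)
  (alpha : T) (halpha : defining_system degA degL t brT dT alpha)
  (X : T) (hX : tdeg_pos degA degL t 0 X)
  (N : nat) (hN : iter N (brT X) (dT X + brT alpha X) = 0) :
  let beta := gauge brT dT N X alpha in
  defining_system degA degL t brT dT beta /\
  (* m(beta) = m(alpha) in H^{2-q}(A) *)
  (forall (alphat betat : Tt) (c c' : A),
      tdeg_pos degA degLt tt 1 alphat -> P alphat = alpha ->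
      tdeg_pos degA degLt tt 1 betat -> P betat = beta ->
      MC_F brTt dTt alphat = tt c z -> MC_F brTt dTt betat = tt c' z ->
      exists b : A, degA (1 - q) b /\ c' - c = dA b).
Proof.
move=> beta.
have ht := hT.1; have htt := hTt.1.
case: halpha => hal MCal.
split.
  split; first exact: (T_gauge_D hA hL hTd N hX hal).
  rewrite (T_gauge_MC hA hL ht hTd hX hal hN) // MCal.
  exact: (lin0 ((bilT hTd).1 X)).
move=> alphat betat c c' halt Palt hbet Pbet MCa MCb.
have grLt : is_graded degLt by case: hLt => [[H _ _ _ _] _].
have grL : is_graded degL by case: hL => [[H _ _ _ _] _].
have grA : is_graded degA by case: hA => [[H _ _ _ _] _].
have lpi : is_linear pi by case: hpi.
have [phi [lphi phiz phiH]] : exists phi : Lt -> rat^o, [/\ is_linear phi, phi z = 1 &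
    forall h, (exists i, i != q /\ degLt i h) -> phi h = 0].
  apply: functional_exists => sz.
  by move/eqP: z_neq0; apply; exact: (span_off grLt sz z_deg).
have phiZ : forall (r : rat) u, phi (r *: u) = r * phi u.
  by move=> r u; rewrite (linZ lphi).
have ker_phi : forall u, pi u = 0 -> u = phi u *: z.
  by move=> u /kerpi [c0 ->]; rewrite phiZ phiz mulr1.
have piz : pi z = 0 by apply/kerpi; exists 1; rewrite scale1r.
have [rho [lrho rhot _]] : exists rho : Tt -> A, [/\ is_linear rho,
    (forall a u, rho (tt a u) = phi u *: a) &
    (forall h : Tt -> A, is_linear h -> (forall a u, h (tt a u) = phi u *: a) ->
        forall x, h x = rho x)].
  apply: hTt.2; split.
  - move=> a r u v; rewrite lphi scalerDl scalerA.
    by [].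
  - by move=> u r a b; rewrite scalerDr !scalerA mulrC.
have rho_z : forall x, rho (tt x z) = x by move=> x; rewrite rhot phiz scale1r.
have pre : forall w, {u | pi u = w}.
  by move=> w; apply: constructive_indefinite_description; apply: pi_surj.
pose sct w := proj1_sig (pre w) - phi (proj1_sig (pre w)) *: z.
have pi_sct : forall w, pi (sct w) = w.
  by move=> w; rewrite /sct (linB lpi) (linZ lpi) piz scaler0 subr0; case: (pre w).
have phi_sct : forall w, phi (sct w) = 0.
  by move=> w; rewrite /sct (linB lphi) phiZ phiz mulr1 subrr.
have decomp : forall u, u = sct (pi u) + phi u *: z.
  move=> u; have k : pi (u - sct (pi u)) = 0 by rewrite (linB lpi) pi_sct subrr.
  have := ker_phi _ k; rewrite (linB lphi) phi_sct subr0 => e.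
  by rewrite -e addrC subrK.
have lsct : is_linear sct.
  move=> r w1 w2; set D := sct (r *: w1 + w2) - (r *: sct w1 + sct w2).
  have k : pi D = 0.
    by rewrite /D (linB lpi) lpi !pi_sct subrr.
  have pD : phi D = 0.
    by rewrite /D (linB lphi) lphi !phi_sct; rewrite /GRing.scale /=; rewrite mulr0 !subrr.
  by apply/eqP; rewrite -subr_eq0 -/D (ker_phi _ k) pD scale0r.
have [sigma [lsig sigt _]] : exists sigma : T -> Tt, [/\ is_linear sigma,
    (forall a w, sigma (t a w) = tt a (sct w)) &
    (forall h : T -> Tt, is_linear h -> (forall a w, h (t a w) = tt a (sct w)) ->
        forall x, h x = sigma x)].
  apply: hT.2; split.
  - by move=> a; exact: (lin_comp lsct (htt.1 a)).
  - by move=> w; exact: (htt.2 (sct w)).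
have dec : forall x, x = sigma (P x) + tt (rho x) z.
  have [g [lg gt guniq]] := hTt.2 _ tt htt.
  move=> x; transitivity (g x); first exact: (guniq (fun x => x) (@linI _)).
  symmetry; apply: (guniq (fun x => sigma (P x) + tt (rho x) z)).
    exact: (linA (lin_comp hP lsig) (lin_comp lrho (htt.2 z))).
  move=> a u; rewrite hPt sigt rhot (linZ (htt.2 z)) -(linZ (htt.1 a)) -(linD (htt.1 a)).
  by rewrite -decomp.
have [Xt [hXt PXt]] : exists Xt, tdeg_pos degA degLt tt 0 Xt /\ P Xt = X.
  elim/span_ind: hX => [|r v y [i [j [a [w [pi1 Hij ha hw ->]]]]] [yt [hyt Pyt]]].
    by exists 0; split; [apply: span0 | apply: (lin0 hP)].
  have [u [hu pu]] := homog_lift grLt grL lpi (pi_deg hpi) pi_surj hw.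
  exists (r *: tt a u + yt); split.
    by apply: span_cons => //; exists i, j, a, u; split.
  by rewrite hP hPt pu Pyt.
have [K hK] := nilLt.
pose yt := dTt Xt + brTt alphat Xt.
have hyt : tdeg_pos degA degLt tt 1 yt.
  apply: spanD; first by have := G_d hA hLt hTtd hXt; rewrite add0r.
  by have := G_br hA hLt hTtd halt hXt; rewrite addr0.
have hit : forall n, tdeg_pos degA degLt tt 1 (iter n (brTt Xt) yt).
  elim=> [|n IHn] //=.
  by have := G_br hA hLt hTtd hXt IHn; rewrite add0r.
have hMt : iter (K + N) (brTt Xt) yt = 0.
  by rewrite iterD; apply: (G_nil hA hLt htt hTtd hK hXt (hit N)).
pose betah := gauge brTt dTt (K + N) Xt alphat.
have Pbh : P betah = beta.
  rewrite /betah (P_gauge hA hLt hpi hTd hTtd hP hPt _ hXt halt) PXt Palt.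
  by apply: gauge_ext => //; [exact: (bilT hTd) | exact: leq_addl].
have hbh : tdeg_pos degA degLt tt 1 betah by exact: (T_gauge_D hA hLt hTtd _ hXt halt).
have brz_r : forall n x b i, tdeg_pos degA degLt tt n x -> degA i b -> brTt x (tt b z) = 0.
  move=> n x b i hx hb.
  apply: (@span_ext _ _ (fun x => brTt x (tt b z)) (fun _ => 0) _ x) hx.
  - exact: ((bilT hTtd).2 _).
  - by move=> r u v; rewrite scaler0 addr0.
  move=> u [i1 [j1 [a [w [_ _ ha hw ->]]]]].
  rewrite (brT_t hTtd ha hw hb z_deg) (antiL hLt hw z_deg) z_central.
  by rewrite scaler0 oppr0 (lin0 (htt.1 _)) scaler0.
have brz_l : forall n y b i, tdeg_pos degA degLt tt n y -> degA i b -> brTt (tt b z) y = 0.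
  move=> n y b i hy hb.
  apply: (@span_ext _ _ (fun y => brTt (tt b z) y) (fun _ => 0) _ y) hy.
  - exact: ((bilT hTtd).1 _).
  - by move=> r u v; rewrite scaler0 addr0.
  move=> u [i1 [j1 [a [w [_ _ ha hw ->]]]]].
  by rewrite (brT_t hTtd hb z_deg ha hw) z_central (lin0 (htt.1 _)) scaler0.
have MCbh : MC_F brTt dTt betah = tt c z.
  rewrite (T_gauge_MC hA hLt htt hTtd hXt halt hMt) // MCa.
  have [s [hs cs]] : exists s : seq (int * A), (forall p, p \in s -> degA p.1 p.2) /\
     c = \sum_(p <- s) p.2 by case: grA => _ _ H _; apply: H.
  rewrite cs (lin_sum (htt.2 z)) (lin_sum ((bilT hTtd).1 Xt)) big1_seq // => p /andP[_ ps].
  exact: (brz_r _ _ _ _ hXt (hs p ps)).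
pose gam := betat - betah.
have Pgam : P gam = 0 by rewrite /gam (linB hP) Pbet Pbh subrr.
have hgam : tdeg_pos degA degLt tt 1 gam by apply: spanB.
pose b := rho gam.
have gam_e : gam = tt b z by rewrite {1}(dec gam) Pgam (lin0 lsig) add0r.
have hb : degA (1 - q) b.
  rewrite /b; elim/span_ind: hgam => [|r v y [i [j [a [u [_ Hij ha hu ->]]]]] IH].
    by rewrite (lin0 lrho); apply: deg0.
  rewrite lrho rhot; apply: (degA_lin hA) => //.
  case: (eqVneq j q) => [jq|jq].
    subst j; have -> : 1 - q = i by lia.
    exact: degZ.
  by rewrite phiH ?scale0r ?scaler0; [apply: deg0 | exists j].
exists b; split => //.
clearbody betah.
have hgz : tdeg_pos degA degLt tt 1 (tt b z) by rewrite -gam_e.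
have e : MC_F brTt dTt betat = MC_F brTt dTt betah + tt (dA b) z.
  have -> : betat = betah + tt b z by rewrite -gam_e /gam addrC subrK.
  rewrite /MC_F (linD (lindT hTtd)) (linD ((bilT hTtd).2 _)) !(linD ((bilT hTtd).1 _)).
  rewrite (brz_r _ _ _ _ hbh hb) (brz_l _ _ _ _ hbh hb) (brz_l _ _ _ _ hgz hb).
  rewrite (dT_t hTtd hb z_deg) z_closed (lin0 (htt.1 _)) scaler0 !addr0.
  by rewrite addrAC.
have := congr1 rho (etrans (esym MCb) e).
rewrite MCbh -(linD (htt.2 z)) !rho_z => ->.
by rewrite addrC addKr.
Qed.
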